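(* $\mathrm{Win}_\mathcal{A} \equiv_W \mathrm{LPO}$.
   Context: Weihrauch reducibility: for partial multivalued maps $f,g$ between represented spaces (spaces $(X,\delta_X)$ with $\delta_X:\subseteq\mathbb{N}^\mathbb{N}\to X$ a partial surjection), $f\leq_W g$ iff there are computable partial $K,H:\subseteq\mathbb{N}^\mathbb{N}\to\mathbb{N}^\mathbb{N}$ such that for every realizer $G$ of $g$, $p\mapsto K(\langle p,G(H(p))\rangle)$ realizes $f$ (a realizer $F$ of $f:X\rightrightarrows Y$ satisfies $\delta_Y(F(p))\in f(\delta_X(p))$ for $\delta_X(p)\in\mathrm{dom}(f)$); $\equiv_W$ is the induced equivalence. $\mathrm{LPO}:\{0,1\}^\mathbb{N}\to\{0,1\}$ maps $p$ to $1$ iff $p=0^\mathbb{N}$. $\mathcal{A}$ denotes the closed subsets of $\{0,1\}^\mathbb{N}$, a closed set being named by an enumeration of words $w$ with $\bigcup w\{0,1\}^\mathbb{N}$ equal to its complement. Games: a win/lose game has two players 1 and 2, choices $\{0,1\}$, a turn function $d:\{0,1\}^*\to\{1,2\}$ (given as lookup table) and a winning set for player 1 (player 2 wins on the complement); a strategy of a player is a function from the histories $d^{-1}(i)$ to $\{0,1\}$, and it is winning if every play consistent with it is won by that player. $\mathrm{Win}_\Gamma$ takes a win/lose game whose winning set for player 1 is given by a $\Gamma$-name and outputs which player has a winning strategy. *)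

(* Defs.v *)
From Stdlib Require Import Arith List Lia Classical FunctionalExtensionality
  PropExtensionality ProofIrrelevance.
Import ListNotations.
Set Implicit Arguments.

Definition baire := nat -> nat.

Definition bpair (p q : baire) : baire :=
  fun n => if Nat.even n then p (Nat.div2 n) else q (Nat.div2 n).
Definition bfst (p : baire) : baire := fun n => p (2 * n).
Definition bsnd (p : baire) : baire := fun n => p (2 * n + 1).

Inductive rec : Type :=
| RZero | RSucc | RProj (i : nat)
| RComp (f : rec) (gs : list rec)
| RPrec (f g : rec)
| RMu (f : rec).

Inductive reval : rec -> list nat -> nat -> Prop :=
| ev_zero args : reval RZero args 0
| ev_succ args : reval RSucc args (S (hd 0 args))
| ev_proj i args : reval (RProj i) args (nth i args 0)
| ev_comp f gs args vs v :
    revals gs args vs -> reval f vs v -> reval (RComp f gs) args v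
| ev_prec0 f g args v : reval f args v -> reval (RPrec f g) (0 :: args) v
| ev_precS f g n args r v :
    reval (RPrec f g) (n :: args) r -> reval g (n :: r :: args) v ->
    reval (RPrec f g) (S n :: args) v
| ev_mu f args v :
    reval f (v :: args) 0 ->
    (forall m, m < v -> exists r, reval f (m :: args) (S r)) ->
    reval (RMu f) args v
with revals : list rec -> list nat -> list nat -> Prop :=
| evs_nil args : revals nil args nil
| evs_cons g gs args v vs :
    reval g args v -> revals gs args vs -> revals (g :: gs) args (v :: vs).

Definition rec_computable2 (h : nat -> nat -> nat) : Prop :=
  exists c : rec, forall a b, reval c [a; b] (h a b).

Definition cpair (x y : nat) : nat := (x + y) * (x + y + 1) / 2 + y.
Fixpoint lcode (l : list nat) : nat :=
  match l with nil => 0 | a :: l' => S (cpair a (lcode l')) end.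

Definition bprefix (p : baire) (k : nat) : list nat := map p (seq 0 k).

(* A partial F :⊆ N^N -> N^N (None = undefined) is computable iff a
   type-2 machine computes it on its domain; equivalently there is a total
   computable h with h(w,n) = 0 meaning "no output yet" and h(w,n) = v+1
   meaning "the n-th output symbol is v", consistent on prefixes of p. *)
Definition computable (F : baire -> option baire) : Prop :=
  exists h, rec_computable2 h /\
    forall p q, F p = Some q -> forall n,
      (exists k, h (lcode (bprefix p k)) n <> 0) /\
      (forall k, h (lcode (bprefix p k)) n <> 0 ->
                 h (lcode (bprefix p k)) n = S (q n)).

(* delta :⊆ N^N -> X is given by its graph [names]; it is single-valued
   and surjective. *)
Record rep_space := {
  carrier :> Type;
  names : baire -> carrier -> Prop;
  names_fun : forall p x y, names p x -> names p y -> x = y;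
  names_surj : forall x, exists p, names p x }.

(* multivalued partial maps X ⇉ Y are relations; dom f = {x | exists y, f x y} *)
Definition realizes {X Y : rep_space} (F : baire -> option baire)
  (f : X -> Y -> Prop) : Prop :=
  forall p x, names X p x -> (exists y, f x y) ->
    exists q, F p = Some q /\ exists y, names Y q y /\ f x y.

Definition W_le {X Y X' Y' : rep_space} (f : X -> Y -> Prop)
  (g : X' -> Y' -> Prop) : Prop :=
  exists H K : baire -> option baire,
    computable H /\ computable K /\
    forall G : baire -> option baire, realizes G g ->
      realizes (fun p => match H p with
                         | Some h => match G h with
                                     | Some r => K (bpair p r)
                                     | None => None end
                         | None => None end) f.

Definition W_equiv {X Y X' Y' : rep_space} (f : X -> Y -> Prop)
  (g : X' -> Y' -> Prop) : Prop := W_le f g /\ W_le g f.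

Definition image_space (T : Type) (nm : baire -> T -> Prop)
  (Hf : forall p x y, nm p x -> nm p y -> x = y) : rep_space.
Proof.
  refine {| carrier := {x : T | exists p, nm p x};
            names := fun p x => nm p (proj1_sig x) |}.
  - intros p [x hx] [y hy]; simpl; intros H1 H2.
    pose proof (Hf _ _ _ H1 H2); subst. f_equal. apply proof_irrelevance.
  - intros [x [p hp]]; exists p; exact hp.
Defined.

Definition Cantor : rep_space.
Proof.
  refine {| carrier := nat -> bool;
            names := fun p x => forall n, p n = (if x n then 1 else 0) |}.
  - intros p x y Hx Hy; apply functional_extensionality; intro n.
    specialize (Hx n); specialize (Hy n).
    destruct (x n), (y n); congruence.
  - intro x; exists (fun n => if x n then 1 else 0); reflexivity.
Defined.

Definition Two : rep_space.
Proof.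
  refine {| carrier := bool;
            names := fun p b => p 0 = (if b then 1 else 0) |}.
  - intros p x y Hx Hy; destruct x, y; congruence.
  - intro b; exists (fun _ => if b then 1 else 0); reflexivity.
Defined.

Definition LPO (x : Cantor) (b : Two) : Prop :=
  b = true <-> (forall n, x n = false).

Inductive player := P1 | P2.

Definition player_code (i : player) : nat := match i with P1 => 1 | P2 => 2 end.
Definition Players : rep_space.
Proof.
  refine {| carrier := player; names := fun p i => p 0 = player_code i |}.
  - intros p x y Hx Hy; cbn in *; destruct x, y; cbn in *; congruence.
  - intro i; exists (fun _ => player_code i); reflexivity.
Defined.

Definition cprefix (x : nat -> bool) (n : nat) : list bool := map x (seq 0 n).

(* standard bijection {0,1}^* -> N (length-lexicographic order):
   w |-> (binary value of 1w) - 1 *)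
Definition widx (w : list bool) : nat :=
  fold_left (fun a (b : bool) => 2 * a + (if b then 1 else 0)) w 1 - 1.

Record game := { turn : list bool -> player; win1 : (nat -> bool) -> Prop }.

(* A-name of a closed set: an enumeration of words (p(n) = 0: no word,
   p(n) = k+1: the k-th word) whose cylinders cover the complement *)
Definition closed_names (q : baire) (A : (nat -> bool) -> Prop) : Prop :=
  forall x, A x <-> (forall n w, q n = S (widx w) -> cprefix x (length w) <> w).

Definition game_names (p : baire) (G : game) : Prop :=
  (forall w, (bfst p (widx w) = 1 /\ turn G w = P1) \/
             (bfst p (widx w) = 2 /\ turn G w = P2)) /\
  closed_names (bsnd p) (win1 G).

Lemma game_names_fun p G H : game_names p G -> game_names p H -> G = H.
Proof.
  destruct G as [d A], H as [e B]; simpl; intros [Hd HA] [He HB].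
  assert (d = e).
  { apply functional_extensionality; intro w.
    destruct (Hd w) as [[? ?]|[? ?]], (He w) as [[? ?]|[? ?]]; simpl in *; congruence. }
  assert (A = B).
  { apply functional_extensionality; intro x; apply propositional_extensionality.
    specialize (HA x); specialize (HB x); simpl in *; tauto. }
  subst; reflexivity.
Qed.

Definition ClosedGames : rep_space := @image_space game game_names game_names_fun.

Definition consistent (d : list bool -> player) (i : player)
  (s : list bool -> bool) (x : nat -> bool) : Prop :=
  forall n, d (cprefix x n) = i -> x n = s (cprefix x n).

Definition winning_strategy (G : game) (i : player) (s : list bool -> bool) : Prop :=
  forall x, consistent (turn G) i s x ->
    match i with P1 => win1 G x | P2 => ~ win1 G x end.

Definition Win_A (G : ClosedGames) (i : Players) : Prop :=
  exists s, winning_strategy (proj1_sig G) i s.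

(* Main.v *)
Require Import Defs.
From Stdlib Require Import Arith List Lia Classical FunctionalExtensionality PropExtensionality ProofIrrelevance ClassicalEpsilon.
Import ListNotations.
Set Implicit Arguments.


Definition PR (F : list nat -> nat) := exists c, forall l, reval c l (F l).

Lemma PR_ext F G : (forall l, F l = G l) -> PR F -> PR G.
Proof. intros E [c Hc]; exists c; intro l; rewrite <- E; auto. Qed.

Lemma PR_const0 : PR (fun _ => 0).
Proof. exists RZero; intro; constructor. Qed.

Lemma PR_nth i : PR (fun l => nth i l 0).
Proof. exists (RProj i); intro; constructor. Qed.

Lemma PR_list Gs : Forall PR Gs -> exists cs, forall l, revals cs l (map (fun G => G l) Gs).
Proof.
  induction 1. exists nil; intros; constructor.
  destruct H as [g Hg], IHForall as [cs Hcs]. exists (g::cs). intros; simpl; constructor; auto.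
Qed.

Lemma PR_comp F Gs : PR F -> Forall PR Gs -> PR (fun l => F (map (fun G => G l) Gs)).
Proof.
  intros [f Hf] HG. destruct (PR_list HG) as [cs Hcs].
  exists (RComp f cs). intro l. econstructor; eauto.
Qed.

Lemma PR_lift1 f A : PR (fun a => f (nth 0 a 0)) -> PR A -> PR (fun l => f (A l)).
Proof. intros H1 H2. exact (@PR_ext _ _ (fun l => eq_refl) (PR_comp H1 (Forall_cons _ H2 (Forall_nil _)))). Qed.

Lemma PR_lift2 f A B : PR (fun a => f (nth 0 a 0) (nth 1 a 0)) -> PR A -> PR B -> PR (fun l => f (A l) (B l)).
Proof. intros H1 H2 H3.
  exact (@PR_ext _ _ (fun l => eq_refl) (PR_comp H1 (Forall_cons _ H2 (Forall_cons _ H3 (Forall_nil _))))). Qed.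

Lemma PR_lift3 f A B C : PR (fun a => f (nth 0 a 0) (nth 1 a 0) (nth 2 a 0)) -> PR A -> PR B -> PR C -> PR (fun l => f (A l) (B l) (C l)).
Proof. intros H1 H2 H3 H4.
  exact (@PR_ext _ _ (fun l => eq_refl) (PR_comp H1 (Forall_cons _ H2 (Forall_cons _ H3 (Forall_cons _ H4 (Forall_nil _)))))). Qed.

Lemma PR_lift4 f A B C D : PR (fun a => f (nth 0 a 0) (nth 1 a 0) (nth 2 a 0) (nth 3 a 0)) -> PR A -> PR B -> PR C -> PR D -> PR (fun l => f (A l) (B l) (C l) (D l)).
Proof. intros H1 H2 H3 H4 H5.
  exact (@PR_ext _ _ (fun l => eq_refl) (PR_comp H1 (Forall_cons _ H2 (Forall_cons _ H3 (Forall_cons _ H4 (Forall_cons _ H5 (Forall_nil _))))))). Qed.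

Lemma PR_succ A : PR A -> PR (fun l => S (A l)).
Proof. apply (PR_lift1 S). exists RSucc. intro l. destruct l; simpl; constructor. Qed.

Lemma PR_const n : PR (fun _ => n).
Proof. induction n. apply PR_const0. apply (PR_succ IHn). Qed.

Fixpoint prim (F G : list nat -> nat) (n : nat) (a : list nat) : nat :=
  match n with 0 => F a | S k => G (k :: prim F G k a :: a) end.

Lemma PR_prim F G N Hs : PR F -> PR G -> PR N -> Forall PR Hs ->
  PR (fun l => prim F G (N l) (map (fun H => H l) Hs)).
Proof.
  intros [f Hf] [g Hg] [n Hn] HH. destruct (PR_list HH) as [cs Hcs].
  exists (RComp (RPrec f g) (n :: cs)). intro l. econstructor.
  - constructor; eauto.
  - generalize (N l) (map (fun H => H l) Hs). induction n0; intro a; simpl.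
    + constructor; auto.
    + econstructor; eauto.
Qed.

Lemma PR_iter f K X : PR (fun a => f (nth 0 a 0)) -> PR K -> PR X -> PR (fun l => Nat.iter (K l) f (X l)).
Proof.
  intros Hf HK HX.
  assert (HG : PR (fun a => f (nth 1 a 0))) by (apply (PR_lift1 f); auto; apply PR_nth).
  eapply PR_ext; [| apply (PR_prim (PR_nth 0) HG HK (Forall_cons _ HX (Forall_nil _)))].
  intro l; simpl. induction (K l); simpl; congruence.
Qed.

Lemma PR_add A B : PR A -> PR B -> PR (fun l => A l + B l).
Proof.
  intros HA HB. eapply PR_ext; [| apply (@PR_iter S _ _ (PR_succ (PR_nth 0)) HB HA)].
  intro l; simpl. induction (B l); simpl; lia.
Qed.

Lemma PR_pred A : PR A -> PR (fun l => pred (A l)).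
Proof.
  intro HA. eapply PR_ext; [| apply (PR_prim PR_const0 (PR_nth 0) HA (Forall_nil _))].
  intro l; simpl. destruct (A l); reflexivity.
Qed.

Lemma PR_sub A B : PR A -> PR B -> PR (fun l => A l - B l).
Proof.
  intros HA HB. eapply PR_ext; [| apply (@PR_iter pred _ _ (PR_pred (PR_nth 0)) HB HA)].
  intro l; simpl. induction (B l); simpl. lia. rewrite IHn; lia.
Qed.

Fixpoint bsum (f : nat -> nat) n := match n with 0 => 0 | S k => bsum f k + f k end.

Lemma map_nth_seq args : forall pre, map (fun j => nth j (pre ++ args) 0) (seq (length pre) (length args)) = args.
Proof.
  induction args; intro pre; simpl; auto. f_equal.
  - rewrite nth_middle. reflexivity.
  - specialize (IHargs (pre ++ [a])). rewrite <- app_assoc in IHargs. simpl in IHargs.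
    rewrite length_app in IHargs; simpl in IHargs. rewrite Nat.add_comm in IHargs. exact IHargs.
Qed.

Lemma PR_bsumG B N Hs : PR B -> PR N -> Forall PR Hs ->
  PR (fun l => bsum (fun i => B (i :: map (fun H => H l) Hs)) (N l)).
Proof.
  intros HB HN HH.
  set (k := length Hs).
  set (Gs := (fun a => nth 0 a 0) :: map (fun j a => nth j a 0) (seq 2 k)).
  assert (HGs : Forall PR Gs).
  { constructor. apply PR_nth. apply Forall_forall. intros x Hx. apply in_map_iff in Hx.
    destruct Hx as [j [<- _]]. apply PR_nth. }
  pose proof (PR_comp HB HGs) as HBc.
  assert (HG := PR_add (PR_nth 1) HBc).
  eapply PR_ext; [| apply (PR_prim PR_const0 HG HN HH)].
  intro l; simpl. induction (N l); simpl; auto. rewrite IHn. f_equal. f_equal.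
  unfold Gs. simpl. f_equal. rewrite map_map.
  pose proof (map_nth_seq (map (fun H => H l) Hs) [n; bsum (fun i => B (i :: map (fun H0 : list nat -> nat => H0 l) Hs)) n]) as E.
  simpl in E. unfold k. rewrite <- (length_map (fun H => H l) Hs). exact E.
Qed.

Lemma PR_bsum0 f N : PR (fun a => f (nth 0 a 0)) -> PR N -> PR (fun l => bsum f (N l)).
Proof. intros Hf HN. exact (@PR_ext _ _ (fun l => eq_refl) (PR_bsumG Hf HN (Forall_nil _))). Qed.

Lemma PR_bsum1 f N X : PR (fun a => f (nth 0 a 0) (nth 1 a 0)) -> PR N -> PR X -> PR (fun l => bsum (fun i => f i (X l)) (N l)).
Proof. intros Hf HN HX. exact (@PR_ext _ _ (fun l => eq_refl) (PR_bsumG Hf HN (Forall_cons _ HX (Forall_nil _)))). Qed.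

Lemma PR_bsum2 f N X Y : PR (fun a => f (nth 0 a 0) (nth 1 a 0) (nth 2 a 0)) -> PR N -> PR X -> PR Y -> PR (fun l => bsum (fun i => f i (X l) (Y l)) (N l)).
Proof. intros Hf HN HX HY. exact (@PR_ext _ _ (fun l => eq_refl) (PR_bsumG Hf HN (Forall_cons _ HX (Forall_cons _ HY (Forall_nil _))))). Qed.

Lemma PR_bsum3 f N X Y Z : PR (fun a => f (nth 0 a 0) (nth 1 a 0) (nth 2 a 0) (nth 3 a 0)) -> PR N -> PR X -> PR Y -> PR Z -> PR (fun l => bsum (fun i => f i (X l) (Y l) (Z l)) (N l)).
Proof. intros Hf HN HX HY HZ. exact (@PR_ext _ _ (fun l => eq_refl) (PR_bsumG Hf HN (Forall_cons _ HX (Forall_cons _ HY (Forall_cons _ HZ (Forall_nil _)))))). Qed.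

Lemma bsum_const c n : bsum (fun _ => c) n = n * c.
Proof. induction n; simpl; lia. Qed.

Lemma PR_mul A B : PR A -> PR B -> PR (fun l => A l * B l).
Proof.
  intros HA HB. eapply PR_ext; [| apply (@PR_bsum1 (fun _ x => x) B A (PR_nth 1) HB HA)].
  intro l; simpl. rewrite bsum_const. lia.
Qed.

Lemma PR_ifeq X Y A B : PR X -> PR Y -> PR A -> PR B -> PR (fun l => if X l =? Y l then A l else B l).
Proof.
  intros HX HY HA HB.
  set (E := fun l => 1 - ((X l - Y l) + (Y l - X l))).
  assert (HE : PR E) by (apply PR_sub; [apply PR_const| apply PR_add; apply PR_sub; auto]).
  eapply PR_ext; [| apply (PR_add (PR_mul HA HE) (PR_mul HB (PR_sub (PR_const 1) HE)))].
  intro l; unfold E. destruct (Nat.eqb_spec (X l) (Y l)).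
  - replace (1 - (X l - Y l + (Y l - X l))) with 1 by lia. lia.
  - replace (1 - (X l - Y l + (Y l - X l))) with 0 by lia. lia.
Qed.

Lemma PR_ifle X Y A B : PR X -> PR Y -> PR A -> PR B -> PR (fun l => if X l <=? Y l then A l else B l).
Proof.
  intros HX HY HA HB.
  set (E := fun l => 1 - (X l - Y l)).
  assert (HE : PR E) by (apply PR_sub; [apply PR_const| apply PR_sub; auto]).
  eapply PR_ext; [| apply (PR_add (PR_mul HA HE) (PR_mul HB (PR_sub (PR_const 1) HE)))].
  intro l; unfold E. destruct (Nat.leb_spec (X l) (Y l)).
  - replace (1 - (X l - Y l)) with 1 by lia. lia.
  - replace (1 - (X l - Y l)) with 0 by lia. lia.
Qed.

Lemma PR_iflt X Y A B : PR X -> PR Y -> PR A -> PR B -> PR (fun l => if X l <? Y l then A l else B l).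
Proof. intros. apply (PR_ifle (X := fun l => S (X l))); auto. apply PR_succ; auto. Qed.

Lemma bsum_ext f g n : (forall t, t < n -> f t = g t) -> bsum f n = bsum g n.
Proof. induction n; simpl; intros; auto. rewrite IHn, H; auto. Qed.

Lemma bsum_lt s n : bsum (fun t => if t <? s then 1 else 0) n = Nat.min s n.
Proof. induction n; simpl. lia. rewrite IHn. destruct (Nat.ltb_spec n s); lia. Qed.

Lemma bsum_count f s n : s <= n -> (forall t, t < n -> f t = if t <? s then 1 else 0) -> bsum f n = s.
Proof. intros Hs Hf. rewrite (bsum_ext _ _ Hf), bsum_lt. lia. Qed.

Definition mydiv x y := if y =? 0 then 0 else bsum (fun t => if S t * y <=? x then 1 else 0) x.

Lemma mydiv_spec x y : mydiv x y = x / y.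
Proof.
  unfold mydiv. destruct (Nat.eqb_spec y 0). subst; reflexivity.
  apply bsum_count.
  - pose proof (Nat.div_mod_eq x y). nia.
  - intros t _. pose proof (Nat.div_mod_eq x y). pose proof (Nat.mod_upper_bound x y n).
    set (q := x / y) in *. set (r := x mod y) in *.
    destruct (Nat.leb_spec (S t * y) x), (Nat.ltb_spec t q); auto; nia.
Qed.

Lemma PR_div A B : PR A -> PR B -> PR (fun l => A l / B l).
Proof.
  intros HA HB. eapply PR_ext; [intro l; apply mydiv_spec|]. unfold mydiv.
  apply PR_ifeq; auto. apply PR_const. apply PR_const.
  apply (@PR_bsum2 (fun t x y => if S t * y <=? x then 1 else 0) A A B); auto.
  apply PR_ifle; [apply PR_mul; [apply PR_succ, PR_nth|apply PR_nth]|apply PR_nth|apply PR_const|apply PR_const].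
Qed.

Lemma PR_mod A B : PR A -> PR B -> PR (fun l => A l mod B l).
Proof.
  intros HA HB. eapply PR_ext; [intro l; symmetry; apply Nat.Div0.mod_eq|].
  apply PR_sub; auto. apply PR_mul; auto. apply PR_div; auto.
Qed.

Lemma PR_pow2 A : PR A -> PR (fun l => 2 ^ A l).
Proof.
  intros HA. eapply PR_ext; [| apply (@PR_iter (fun r => r + r) A (fun _ => 1))]; auto.
  - intro l; simpl. induction (A l); simpl; auto. rewrite IHn; lia.
  - apply PR_add; apply PR_nth.
  - apply PR_const.
Qed.

Ltac prt := repeat first [ apply PR_const | apply PR_nth | apply PR_succ | apply PR_add | apply PR_sub
  | apply PR_mul | apply PR_div | apply PR_mod | apply PR_pow2 | apply PR_pred
  | apply PR_ifeq | apply PR_iflt | apply PR_ifle | assumption ].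

Definition tri s := bsum (fun t => t) (S s).

Lemma tri_S s : tri (S s) = tri s + S s.
Proof. reflexivity. Qed.

Lemma tri2 s : 2 * tri s = s * (s + 1).
Proof. induction s. reflexivity. rewrite tri_S. nia. Qed.

Lemma tri_mono a b : a <= b -> tri a <= tri b.
Proof. induction 1; auto. rewrite tri_S; lia. Qed.

Lemma tri_ge s : s <= tri s.
Proof. destruct s; auto. rewrite tri_S. lia. Qed.

Lemma cpair_tri x y : cpair x y = tri (x + y) + y.
Proof.
  unfold cpair. f_equal. rewrite <- tri2. rewrite Nat.mul_comm. apply Nat.div_mul. lia.
Qed.

Definition usum z := bsum (fun t => if tri (S t) <=? z then 1 else 0) z.

Lemma usum_spec s z : tri s <= z < tri (S s) -> usum z = s.
Proof.
  intros [H1 H2]. unfold usum. apply bsum_count.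
  - pose proof (tri_ge s); lia.
  - intros t _. destruct (Nat.leb_spec (tri (S t)) z), (Nat.ltb_spec t s); auto.
    + pose proof (@tri_mono (S s) (S t)); lia.
    + pose proof (@tri_mono (S t) s); lia.
Qed.

Definition csnd z := z - tri (usum z).
Definition cfst z := usum z - csnd z.

Lemma unpair_cpair x y : cfst (cpair x y) = x /\ csnd (cpair x y) = y.
Proof.
  rewrite cpair_tri. assert (usum (tri (x + y) + y) = x + y).
  { apply usum_spec. rewrite tri_S. lia. }
  unfold cfst, csnd; rewrite H. lia.
Qed.

Lemma PR_tri A : PR A -> PR (fun l => tri (A l)).
Proof.
  intro HA. unfold tri. apply (@PR_bsum0 (fun t => t) (fun l => S (A l))). apply PR_nth. prt.
Qed.

Lemma PR_usum A : PR A -> PR (fun l => usum (A l)).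
Proof.
  intro HA. unfold usum.
  apply (@PR_bsum1 (fun t z => if tri (S t) <=? z then 1 else 0)); auto.
  apply PR_ifle; [apply PR_tri; prt|prt..].
Qed.

Lemma PR_csnd A : PR A -> PR (fun l => csnd (A l)).
Proof. intro HA. unfold csnd. apply PR_sub; auto. apply PR_tri, PR_usum; auto. Qed.

Lemma PR_cfst A : PR A -> PR (fun l => cfst (A l)).
Proof. intro HA. unfold cfst. apply PR_sub. apply PR_usum; auto. apply PR_csnd; auto. Qed.

Definition ltl c := csnd (c - 1).
Definition lhd c := cfst (c - 1).
Definition tlk k c := Nat.iter k ltl c.
Definition elem k c := lhd (tlk k c).

Lemma ltl_cons a l : ltl (lcode (a :: l)) = lcode l.
Proof. unfold ltl; simpl. rewrite Nat.sub_0_r. apply unpair_cpair. Qed.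
Lemma lhd_cons a l : lhd (lcode (a :: l)) = a.
Proof. unfold lhd; simpl. rewrite Nat.sub_0_r. apply unpair_cpair. Qed.
Lemma ltl_0 : ltl 0 = 0.
Proof. reflexivity. Qed.

Lemma tlk_skipn k l : tlk k (lcode l) = lcode (skipn k l).
Proof.
  unfold tlk. revert l; induction k; intro l; auto.
  rewrite Nat.iter_succ_r. destruct l.
  - simpl. rewrite ltl_0. clear IHk. induction k; simpl; auto. rewrite IHk; reflexivity.
  - rewrite ltl_cons. apply IHk.
Qed.

Lemma elem_nth k l : k < length l -> elem k (lcode l) = nth k l 0.
Proof.
  unfold elem. rewrite tlk_skipn. revert l; induction k; intros l H; destruct l; simpl in H; try lia.
  apply lhd_cons. apply IHk; lia.
Qed.

Lemma tlk_nz k l : tlk k (lcode l) <> 0 <-> k < length l.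
Proof.
  rewrite tlk_skipn. split; intro H.
  - destruct (Nat.lt_ge_cases k (length l)); auto. rewrite skipn_all2 in H; auto. simpl in H; lia.
  - revert l H; induction k; intros l H; destruct l; simpl in *; try lia. apply IHk; lia.
Qed.

Lemma PR_ltl A : PR A -> PR (fun l => ltl (A l)).
Proof. intro HA. unfold ltl. apply PR_csnd. prt. Qed.
Lemma PR_lhd A : PR A -> PR (fun l => lhd (A l)).
Proof. intro HA. unfold lhd. apply PR_cfst. prt. Qed.
Lemma PR_tlk A B : PR A -> PR B -> PR (fun l => tlk (A l) (B l)).
Proof. intros HA HB. unfold tlk. apply PR_iter; auto. apply PR_ltl, PR_nth. Qed.
Lemma PR_elem A B : PR A -> PR B -> PR (fun l => elem (A l) (B l)).
Proof. intros HA HB. unfold elem. apply PR_lhd, PR_tlk; auto. Qed.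

Lemma bprefix_len p k : length (bprefix p k) = k.
Proof. unfold bprefix. rewrite length_map, length_seq. auto. Qed.

Lemma elem_prefix p k i : i < k -> elem i (lcode (bprefix p k)) = p i.
Proof.
  intro H. rewrite elem_nth by (rewrite bprefix_len; auto). unfold bprefix.
  rewrite nth_indep with (d' := p 0) by (rewrite length_map, length_seq; auto).
  rewrite map_nth, seq_nth; auto.
Qed.

Lemma tlk_prefix p k i : tlk i (lcode (bprefix p k)) <> 0 <-> i < k.
Proof. rewrite tlk_nz, bprefix_len. tauto. Qed.

Lemma computable_intro (F : baire -> option baire) (h : nat -> nat -> nat) :
  PR (fun l => h (nth 0 l 0) (nth 1 l 0)) ->
  (forall p q, F p = Some q -> forall n,
      (exists k, h (lcode (bprefix p k)) n <> 0) /\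
      (forall k, h (lcode (bprefix p k)) n <> 0 -> h (lcode (bprefix p k)) n = S (q n))) ->
  computable F.
Proof.
  intros [c Hc] H. exists h. split; auto. exists c. intros a b. apply (Hc [a; b]).
Qed.

Lemma half_even m : (2 * m) / 2 = m /\ (2 * m) mod 2 = 0.
Proof.
  assert (E : (2*m)/2 = m) by (rewrite <- Nat.div2_div; apply Nat.div2_double).
  split; auto. pose proof (Nat.div_mod_eq (2*m) 2). lia.
Qed.
Lemma half_odd m : (2 * m + 1) / 2 = m /\ (2 * m + 1) mod 2 = 1.
Proof.
  assert (E : (2*m+1)/2 = m) by (rewrite <- Nat.div2_div; apply Nat.div2_odd').
  split; auto. pose proof (Nat.div_mod_eq (2*m+1) 2). lia.
Qed.
Lemma bpair_even f g m : bpair f g (2 * m) = f m.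
Proof. unfold bpair. rewrite Nat.even_even, Nat.div2_double. auto. Qed.
Lemma bpair_odd f g m : bpair f g (2 * m + 1) = g m.
Proof. unfold bpair. rewrite Nat.even_odd, Nat.div2_odd'. auto. Qed.

Definition wstep (a : nat) (b : bool) := 2 * a + (if b then 1 else 0).
Lemma fold_ge w : forall a, a <= fold_left wstep w a.
Proof. induction w; intro a0; simpl; auto. specialize (IHw (wstep a0 a)). unfold wstep in *. lia. Qed.

Lemma widx_nil : widx [] = 0.
Proof. reflexivity. Qed.
Lemma widx_0 w : widx w = 0 -> w = [].
Proof.
  destruct w as [|b w]; auto. unfold widx.
  change (fun a (b : bool) => 2 * a + (if b then 1 else 0)) with wstep. simpl. intro H.
  pose proof (fold_ge w (2 * 1 + (if b then 1 else 0))). unfold wstep in *; exfalso. destruct b; simpl in *; lia.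
Qed.
Lemma fold_app_one w b : fold_left wstep (w ++ [b]) 1 = wstep (fold_left wstep w 1) b.
Proof. rewrite fold_left_app. reflexivity. Qed.
Lemma widx_snoc w b : widx (w ++ [b]) = 2 * widx w + 1 + (if b then 1 else 0).
Proof.
  unfold widx. change (fun a (b : bool) => 2 * a + (if b then 1 else 0)) with wstep.
  rewrite fold_app_one. pose proof (fold_ge w 1). set (F := fold_left wstep w 1) in *.
  unfold wstep. destruct b; lia.
Qed.
Lemma widx_bounds w : 2 ^ length w <= S (widx w) < 2 ^ S (length w).
Proof.
  induction w as [|b w IH] using rev_ind. simpl. unfold widx; simpl. lia.
  rewrite widx_snoc, length_app. simpl length. rewrite Nat.add_1_r. simpl (2 ^ S _) in *.
  destruct b; lia.
Qed.

Lemma cprefix_S x n : cprefix x (S n) = cprefix x n ++ [x n].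
Proof. unfold cprefix. rewrite seq_S, map_app. reflexivity. Qed.
Lemma cprefix_len x n : length (cprefix x n) = n.
Proof. unfold cprefix. rewrite length_map, length_seq. auto. Qed.

Lemma exists_consistent d i s : exists x, consistent d i s x.
Proof.
  set (pre := fix pre n := match n with 0 => [] | S k => pre k ++ [s (pre k)] end).
  exists (fun n => s (pre n)).
  assert (E : forall n, cprefix (fun n => s (pre n)) n = pre n).
  { induction n; auto. rewrite cprefix_S, IHn. reflexivity. }
  intros n _. rewrite E. reflexivity.
Qed.

Ltac prt2 := repeat first [ apply PR_const | apply PR_nth | apply PR_tlk | apply PR_elem | apply PR_succ | apply PR_add | apply PR_sub
  | apply PR_mul | apply PR_div | apply PR_mod | apply PR_pow2 | apply PR_pred
  | apply PR_ifeq | apply PR_iflt | apply PR_ifle | assumption ].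

Definition hK (a b : nat) (c n : nat) := if tlk 2 c =? 0 then 0 else S (if elem 1 c =? 1 then a else b).
Definition Kmap (a b : nat) (u : baire) : option baire := Some (fun _ => if u 1 =? 1 then a else b).

Lemma Kmap_comp a b : computable (Kmap a b).
Proof.
  apply computable_intro with (h := hK a b).
  - unfold hK. prt2.
  - intros p q E n. injection E; intros <-. split.
    + exists 3. unfold hK. destruct (Nat.eqb_spec (tlk 2 (lcode (bprefix p 3))) 0); [|lia].
      apply tlk_prefix in e; lia.
    + intros k Hk. unfold hK in *. destruct (Nat.eqb_spec (tlk 2 (lcode (bprefix p k))) 0); [lia|].
      apply tlk_prefix in n0. rewrite elem_prefix by lia. reflexivity.
Qed.

Ltac prt3 := repeat first [ apply PR_const | apply PR_nth | apply PR_tlk | apply PR_elem | apply PR_div | apply PR_mod | apply PR_pow2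
  | apply PR_ifeq | apply PR_iflt | apply PR_ifle | apply PR_succ | apply PR_add | apply PR_sub
  | apply PR_mul | apply PR_pred | assumption ].

Definition h1 (c n : nat) := if tlk (S (n / 2)) c =? 0 then 0 else S (if n mod 2 =? 0 then 1 else elem (n / 2) c).
Definition H1 (p : baire) : option baire := Some (bpair (fun _ => 1) p).

Lemma H1_comp : computable H1.
Proof.
  apply computable_intro with (h := h1).
  - unfold h1. prt3.
  - intros p q E n. injection E; intros <-. split.
    + exists (S (S (n / 2))). unfold h1. destruct (Nat.eqb_spec (tlk (S (n/2)) (lcode (bprefix p (S (S (n/2)))))) 0); [|lia].
      apply tlk_prefix in e; lia.
    + intros k Hk. unfold h1 in *. destruct (Nat.eqb_spec (tlk (S (n/2)) (lcode (bprefix p k))) 0); [lia|].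
      apply tlk_prefix in n0. rewrite elem_prefix by lia.
      destruct (Nat.Even_or_Odd n) as [[m ->]|[m ->]].
      * destruct (half_even m) as [-> ->]. rewrite bpair_even. reflexivity.
      * destruct (half_odd m) as [-> ->]. rewrite bpair_odd. reflexivity.
Qed.

Definition game1 (x : nat -> bool) : game := {| turn := fun _ => P1; win1 := fun _ => forall n, x n = false |}.

Lemma game1_names p (x : nat -> bool) : (forall n, p n = if x n then 1 else 0) ->
  game_names (bpair (fun _ => 1) p) (game1 x).
Proof.
  intro Hp. split.
  - intro w. left. split; auto. unfold bfst. rewrite bpair_even. reflexivity.
  - intro y. simpl. unfold bsnd. split.
    + intros Hx n w E. rewrite bpair_odd, Hp, Hx in E. discriminate.
    + intros H n. specialize (H n []). rewrite bpair_odd, Hp in H.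
      destruct (x n); auto. exfalso. apply (H eq_refl). reflexivity.
Qed.

Lemma LPO_le_Win : W_le LPO Win_A.
Proof.
  exists H1, (Kmap 1 0). split; [apply H1_comp|split; [apply Kmap_comp|]].
  intros G HG p x Hpx _.
  assert (Hn : game_names (bpair (fun _ => 1) p) (game1 x)) by (apply game1_names; exact Hpx).
  set (gx := exist _ (game1 x) (ex_intro (fun q => game_names q (game1 x)) _ Hn) : carrier ClosedGames).
  assert (Hdom : exists y, Win_A gx y).
  { destruct (classic (forall n, x n = false)) as [H|H].
    - exists P1, (fun _ => false). intros y _. exact H.
    - exists P2, (fun _ => false). intros y _. exact H. }
  destruct (HG (bpair (fun _ => 1) p) gx Hn Hdom) as [q [Eq [i [Hi Hwin]]]].
  exists (fun _ => if q 0 =? 1 then 1 else 0). split.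
  - unfold H1. rewrite Eq. reflexivity.
  - exists (match i with P1 => true | P2 => false end). cbn in Hi. destruct i; cbn in Hi; rewrite Hi; split; try reflexivity.
    + split; auto. intros _. destruct Hwin as [s Hs]. destruct (exists_consistent (turn (game1 x)) P1 s) as [y Hy].
      exact (Hs y Hy).
    + split; intro H; [discriminate|]. exfalso. destruct Hwin as [s Hs].
      apply (Hs (fun _ => false)); [intros n Hn'; discriminate|]. exact H.
Qed.

Definition par i := (i - 1) / 2.
Definition anc t i := Nat.iter t par i.
Definition mv c := if c mod 2 =? 0 then 1 else 0.
Definition bit s a := (s / 2 ^ a) mod 2.
Definition ball N (f : nat -> nat) := if bsum (fun t => if f t =? 0 then 1 else 0) N =? 0 then 1 else 0.
Definition consbody (P : nat -> nat) s i t :=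
  if P (2 * anc (S t) i) =? 2 then (if mv (anc t i) =? bit s (anc (S t) i) then 1 else 0) else 1.
Definition consb P m s i := ball m (consbody P s i).
Definition covin (P : nat -> nat) j i t := if P (2 * j + 1) =? S (anc t i) then 1 else 0.
Definition covb P m i := bsum (fun j => bsum (covin P j i) (S m)) m.
Definition Dbody P m s i := if S i <? 2 ^ m then 1 else if 2 ^ S m <=? S i then 1 else if consb P m s i =? 0 then 1 else if covb P m i =? 0 then 0 else 1.
Definition Dgen P m s := ball (2 ^ S m) (Dbody P m s).
Definition out P n := Dgen P (cfst n) (csnd n).
Definition need n := 2 ^ S (S (cfst n)) + 2 * cfst n + 2.
Definition h2 c n := if tlk (need n) c =? 0 then 0 else S (out (fun a => elem a c) n).
Definition H2 (p : baire) : option baire := Some (out p).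

Lemma PR_anc A B : PR A -> PR B -> PR (fun l => anc (A l) (B l)).
Proof. intros HA HB. unfold anc. apply PR_iter; auto. unfold par. prt3. Qed.
Lemma PR_mv A : PR A -> PR (fun l => mv (A l)).
Proof. intros HA. unfold mv. prt3. Qed.
Lemma PR_bit A B : PR A -> PR B -> PR (fun l => bit (A l) (B l)).
Proof. intros HA HB. unfold bit. prt3. Qed.

Lemma PR_ball3 f N X Y Z : PR (fun a => f (nth 0 a 0) (nth 1 a 0) (nth 2 a 0) (nth 3 a 0)) -> PR N -> PR X -> PR Y -> PR Z ->
  PR (fun l => ball (N l) (fun t => f t (X l) (Y l) (Z l))).
Proof.
  intros Hf HN HX HY HZ. unfold ball. apply PR_ifeq; try apply PR_const.
  apply (@PR_bsum3 (fun t x y z => if f t x y z =? 0 then 1 else 0)); auto. prt3.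
Qed.

Ltac prt4 := repeat first [ apply PR_const | apply PR_nth | apply PR_anc | apply PR_mv | apply PR_bit
  | apply PR_tlk | apply PR_elem | apply PR_div | apply PR_mod | apply PR_pow2
  | apply PR_ifeq | apply PR_iflt | apply PR_ifle | apply PR_succ | apply PR_add | apply PR_sub
  | apply PR_mul | apply PR_pred | assumption ].

Lemma PR_consb C M S I : PR C -> PR M -> PR S -> PR I ->
  PR (fun l => consb (fun a => elem a (C l)) (M l) (S l) (I l)).
Proof.
  intros. unfold consb.
  apply (@PR_ball3 (fun t c s i => consbody (fun a => elem a c) s i t)); auto.
  all: try (unfold consbody; prt4).
Qed.

Lemma PR_covb C M I : PR C -> PR M -> PR I ->
  PR (fun l => covb (fun a => elem a (C l)) (M l) (I l)).
Proof.
  intros. unfold covb.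
  apply (@PR_bsum3 (fun j c m i => bsum (covin (fun a => elem a c) j i) (S m))); auto.
  apply (@PR_bsum3 (fun t c j i => covin (fun a => elem a c) j i t)); prt4.
  all: try (unfold covin; prt4).
Qed.

Ltac prt5 := repeat first [ apply PR_const | apply PR_nth | apply PR_consb | apply PR_covb | apply PR_anc | apply PR_mv | apply PR_bit
  | apply PR_tlk | apply PR_elem | apply PR_div | apply PR_mod | apply PR_pow2
  | apply PR_ifeq | apply PR_iflt | apply PR_ifle | apply PR_succ | apply PR_add | apply PR_sub
  | apply PR_mul | apply PR_pred | assumption ].

Lemma PR_Dgen C M S : PR C -> PR M -> PR S -> PR (fun l => Dgen (fun a => elem a (C l)) (M l) (S l)).
Proof.
  intros. unfold Dgen.
  apply (@PR_ball3 (fun i c m s => Dbody (fun a => elem a c) m s i)); [unfold Dbody; prt5| prt4 ..].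
Qed.

Ltac prt6 := repeat first [ apply PR_const | apply PR_nth | apply PR_Dgen | apply PR_cfst | apply PR_csnd
  | apply PR_tlk | apply PR_elem | apply PR_div | apply PR_mod | apply PR_pow2
  | apply PR_ifeq | apply PR_iflt | apply PR_ifle | apply PR_succ | apply PR_add | apply PR_sub
  | apply PR_mul | apply PR_pred | assumption ].

Lemma PR_h2 : PR (fun l => h2 (nth 0 l 0) (nth 1 l 0)).
Proof.
  unfold h2, need, out. prt6.
Qed.

Lemma bsum_zero g N : bsum g N = 0 <-> forall t, t < N -> g t = 0.
Proof.
  induction N; simpl. split; intros; auto; lia.
  rewrite Nat.eq_add_0, IHN. split.
  - intros [H1 H2] t Ht. destruct (Nat.eq_dec t N); subst; auto. apply H1; lia.
  - intro H. split; auto.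
Qed.

Lemma bsum_ge g N t : t < N -> g t <= bsum g N.
Proof. induction N; simpl; intros. lia. destruct (Nat.eq_dec t N); subst. lia. specialize (IHN ltac:(lia)); lia. Qed.

Lemma bsum_nz g N : bsum g N <> 0 -> exists t, t < N /\ g t <> 0.
Proof.
  intro H. apply NNPP. intro H'. apply H. apply bsum_zero. intros t Ht.
  destruct (Nat.eq_dec (g t) 0); auto. exfalso; apply H'; eauto.
Qed.

Lemma ball_spec N f : ball N f = 1 <-> forall t, t < N -> f t <> 0.
Proof.
  unfold ball. destruct (Nat.eqb_spec (bsum (fun t => if f t =? 0 then 1 else 0) N) 0) as [E|E].
  - rewrite bsum_zero in E. split; auto. intros _ t Ht. specialize (E t Ht). simpl in E.
    destruct (Nat.eqb_spec (f t) 0); [discriminate|auto].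
  - split; [discriminate|]. intro H. exfalso. apply E. apply bsum_zero. intros t Ht.
    destruct (Nat.eqb_spec (f t) 0); auto. exfalso; exact (H t Ht e).
Qed.

Lemma ball_01 N f : ball N f = 0 \/ ball N f = 1.
Proof. unfold ball. destruct (_ =? _); auto. Qed.

Lemma par_snoc w b : par (widx (w ++ [b])) = widx w.
Proof.
  unfold par. rewrite widx_snoc. destruct b.
  - replace (2 * widx w + 1 + 1 - 1) with (2 * widx w + 1) by lia. apply half_odd.
  - replace (2 * widx w + 1 + 0 - 1) with (2 * widx w) by lia. apply half_even.
Qed.

Lemma mv_snoc w b : mv (widx (w ++ [b])) = if b then 1 else 0.
Proof.
  unfold mv. rewrite widx_snoc. destruct b.
  - replace (2 * widx w + 1 + 1) with (2 * (widx w + 1)) by lia. rewrite (proj2 (half_even _)). reflexivity.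
  - replace (2 * widx w + 1 + 0) with (2 * widx w + 1) by lia. rewrite (proj2 (half_odd _)). reflexivity.
Qed.

Lemma firstn_S_snoc (v : list bool) k : k < length v -> firstn (S k) v = firstn k v ++ [nth k v false].
Proof.
  revert k; induction v; intros k H; simpl in H. lia.
  destruct k. reflexivity. change (a :: firstn (S k) v = (a :: firstn k v) ++ [nth k v false]). rewrite IHv by lia. reflexivity.
Qed.

Lemma anc_firstn v t : t <= length v -> anc t (widx v) = widx (firstn (length v - t) v).
Proof.
  induction t; intro H.
  - simpl. rewrite Nat.sub_0_r, firstn_all. reflexivity.
  - unfold anc in *. rewrite Nat.iter_succ, IHt by lia.
    replace (length v - t) with (S (length v - S t)) by lia.
    rewrite firstn_S_snoc by lia. apply par_snoc.
Qed.

Lemma cprefix_firstn x m k : k <= m -> firstn k (cprefix x m) = cprefix x k.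
Proof.
  induction m; intro H.
  - replace k with 0 by lia. reflexivity.
  - destruct (Nat.eq_dec k (S m)). subst. apply firstn_all2. rewrite cprefix_len; auto.
    rewrite cprefix_S, firstn_app, IHm by lia. rewrite cprefix_len.
    replace (k - m) with 0 by lia. simpl. apply app_nil_r.
Qed.

Lemma len_bounds n k i : 2 ^ n <= S i < 2 ^ S n -> 2 ^ k <= S i < 2 ^ S k -> n = k.
Proof.
  intros H1 H2. destruct (Nat.lt_trichotomy n k) as [H|[H|H]]; auto; exfalso.
  - pose proof (@Nat.pow_le_mono_r 2 (S n) k ltac:(lia) H). lia.
  - pose proof (@Nat.pow_le_mono_r 2 (S k) n ltac:(lia) H). lia.
Qed.

Lemma widx_inj w w' : widx w = widx w' -> w = w'.
Proof.
  intro E. assert (L : length w = length w').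
  { apply (@len_bounds _ _ (widx w)). apply widx_bounds. rewrite E; apply widx_bounds. }
  revert w' E L. induction w as [|b w IH] using rev_ind; intros w' E L.
  - destruct w'; auto. simpl in L; discriminate.
  - destruct w' as [|b' w'] using rev_ind. rewrite length_app in L; simpl in L; lia.
    rewrite !widx_snoc in E. rewrite !length_app in L; simpl in L.
    assert (b = b') by (destruct b, b'; auto; lia). subst b'.
    f_equal. apply IH; lia.
Qed.

Lemma widx_surj i : exists v, widx v = i.
Proof.
  induction i as [i IH] using lt_wf_ind. destruct i. exists []; reflexivity.
  destruct (Nat.Even_or_Odd i) as [[a ->]|[a ->]].
  - destruct (IH a ltac:(lia)) as [v Hv]. exists (v ++ [false]). rewrite widx_snoc, Hv. lia.
  - destruct (IH a ltac:(lia)) as [v Hv]. exists (v ++ [true]). rewrite widx_snoc, Hv. lia.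
Qed.

Lemma bits_enc (g : nat -> nat) : (forall a, g a <= 1) -> forall N,
  bsum (fun a => 2 ^ a * g a) N < 2 ^ N /\ forall a, a < N -> bit (bsum (fun a => 2 ^ a * g a) N) a = g a.
Proof.
  intros Hg N. induction N as [|N [IH1 IH2]].
  - simpl. split. lia. intros; lia.
  - simpl bsum. split.
    + specialize (Hg N). simpl. nia.
    + intros a Ha. unfold bit. destruct (Nat.eq_dec a N).
      * subst. rewrite Nat.mul_comm, Nat.div_add by (apply Nat.pow_nonzero; lia).
        rewrite Nat.div_small by auto. rewrite Nat.add_0_l. apply Nat.mod_small. specialize (Hg N); lia.
      * assert (E : 2 ^ N = 2 ^ a * (2 * 2 ^ (N - S a))).
        { rewrite <- Nat.pow_succ_r', <- Nat.pow_add_r. f_equal. lia. }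
        rewrite E. replace (2 ^ a * (2 * 2 ^ (N - S a)) * g N) with ((2 * 2 ^ (N - S a) * g N) * 2 ^ a) by ring.
        rewrite Nat.div_add by (apply Nat.pow_nonzero; lia).
        replace (2 * 2 ^ (N - S a) * g N) with ((2 ^ (N - S a) * g N) * 2) by ring.
        rewrite Nat.Div0.mod_add. apply IH2. lia.
Qed.

Lemma bit_01 s a : bit s a = 0 \/ bit s a = 1.
Proof. unfold bit. pose proof (Nat.mod_upper_bound (s / 2 ^ a) 2 ltac:(lia)). lia. Qed.

Lemma turn_code p G w : game_names p G -> (p (2 * widx w) = 2 <-> turn G w = P2).
Proof.
  intros [Hd _]. destruct (Hd w) as [[E T]|[E T]]; unfold bfst in E; rewrite E, T; split; congruence.
Qed.

Lemma partA p G (Hn : game_names p G) m s : Dgen p m s = 1 -> exists st, winning_strategy G P2 st.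
Proof.
  intro HD. exists (fun u => bit s (widx u) =? 1). intros x Hx Hw.
  set (v := cprefix x m). set (i := widx v).
  assert (Lv : length v = m) by apply cprefix_len.
  pose proof (widx_bounds v) as Bv. rewrite Lv in Bv.
  apply ball_spec with (t := i) in HD; [|unfold i; lia].
  unfold Dbody in HD. destruct (Nat.ltb_spec (S i) (2 ^ m)); [unfold i in *; lia|].
  destruct (Nat.leb_spec (2 ^ S m) (S i)); [unfold i in *; lia|].
  assert (Hc : consb p m s i = 1).
  { unfold consb. apply ball_spec. intros t Ht. unfold consbody.
    unfold i. rewrite !anc_firstn by lia. rewrite Lv.
    unfold v. rewrite !cprefix_firstn by lia.
    replace (m - t) with (S (m - S t)) by lia. rewrite cprefix_S.
    set (k := m - S t). rewrite mv_snoc.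
    destruct (Nat.eqb_spec (p (2 * widx (cprefix x k))) 2) as [E|E]; [|lia].
    apply (turn_code _ Hn) in E. specialize (Hx k E). rewrite Hx.
    destruct (bit_01 s (widx (cprefix x k))) as [B|B]; rewrite B; simpl; lia. }
  rewrite Hc in HD. simpl in HD.
  destruct (Nat.eqb_spec (covb p m i) 0) as [E|E]; [contradiction|].
  unfold covb in E. apply bsum_nz in E. destruct E as [j [Hj E]].
  apply bsum_nz in E. destruct E as [t [Ht E]]. unfold covin in E.
  destruct (Nat.eqb_spec (p (2 * j + 1)) (S (anc t i))) as [E'|E']; [|lia].
  unfold i in E'. rewrite anc_firstn in E' by lia. rewrite Lv in E'. unfold v in E'.
  rewrite cprefix_firstn in E' by lia.
  destruct Hn as [_ Hc']. apply (proj1 (Hc' x)) with (n := j) (w := cprefix x (m - t)) in Hw.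
  - apply Hw. rewrite cprefix_len. reflexivity.
  - exact E'.
Qed.

Definition cov_l (q : baire) m (u : list bool) :=
  exists j, j < m /\ exists t, t <= length u /\ q j = S (widx (firstn t u)).

Fixpoint Wf (d : list bool -> player) (q : baire) m N u : Prop :=
  match N with
  | 0 => cov_l q m u
  | S N' => cov_l q m u \/ (d u = P2 /\ (Wf d q m N' (u ++ [false]) \/ Wf d q m N' (u ++ [true])))
            \/ (d u = P1 /\ Wf d q m N' (u ++ [false]) /\ Wf d q m N' (u ++ [true]))
  end.

Lemma cov_mono q m m' u : m <= m' -> cov_l q m u -> cov_l q m' u.
Proof. intros H [j [Hj R]]. exists j. split; auto; lia. Qed.

Lemma Wf_mono_m d q m m' N u : m <= m' -> Wf d q m N u -> Wf d q m' N u.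
Proof.
  intro H. revert u; induction N; intros u; simpl. apply cov_mono; auto.
  intros [A|[[B C]|[B [C D]]]]. left; eapply cov_mono; eauto.
  right; left; split; auto. destruct C; [left|right]; auto.
  right; right; auto.
Qed.

Lemma Wf_S d q m N u : Wf d q m N u -> Wf d q m (S N) u.
Proof.
  revert u; induction N; intros u H. simpl. left; auto.
  destruct H as [A|[[B C]|[B [C D]]]]. left; auto.
  right; left; split; auto. destruct C; [left|right]; auto.
  right; right; auto.
Qed.

Lemma Wf_mono_N d q m N N' u : N <= N' -> Wf d q m N u -> Wf d q m N' u.
Proof. induction 1; auto. intro; apply Wf_S; auto. Qed.

Definition Force d q u := exists m N, Wf d q m N u.

Lemma Force_step d q u b : Force d q (u ++ [b]) -> d u = P2 -> Force d q u.
Proof.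
  intros [m [N H]] T. exists m, (S N). right; left; split; auto. destruct b; auto.
Qed.

Lemma Force_step1 d q u : Force d q (u ++ [false]) -> Force d q (u ++ [true]) -> d u = P1 -> Force d q u.
Proof.
  intros [m [N H]] [m' [N' H']] T. exists (m + m'), (S (N + N')). right; right; split; auto.
  split.
  - apply (@Wf_mono_N _ _ _ N); [lia|]. apply (@Wf_mono_m _ _ m); [lia|auto].
  - apply (@Wf_mono_N _ _ _ N'); [lia|]. apply (@Wf_mono_m _ _ m'); [lia|auto].
Qed.

Lemma partB1 G q (Hc : closed_names q (win1 G)) : ~ Force (turn G) q [] -> exists s, winning_strategy G P1 s.
Proof.
  intro NF.
  exists (fun u => if excluded_middle_informative (Force (turn G) q (u ++ [false])) then true else false).
  intros x Hx. simpl.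
  assert (NFx : forall n, ~ Force (turn G) q (cprefix x n)).
  { induction n; auto. rewrite cprefix_S. intro F. apply IHn.
    destruct (turn G (cprefix x n)) eqn:T.
    - specialize (Hx n T). cbv beta in Hx. destruct (excluded_middle_informative (Force (turn G) q (cprefix x n ++ [false]))) as [F0|F0].
      + rewrite Hx in F. apply Force_step1; auto.
      + rewrite Hx in F. contradiction.
    - eapply Force_step; eauto. }
  apply Hc. intros n w E Ew. apply (NFx (length w)). rewrite Ew.
  exists (S n), 0. simpl. exists n. split; auto. exists (length w). split; auto.
  rewrite firstn_all. exact E.
Qed.

Lemma claimL d q M (c : list bool -> bool)
  (Hcdef : forall u, c u = true <-> Wf d q M (M - length u - 1) (u ++ [true])) :
  forall k u, length u + k = M -> Wf d q M k u -> forall v, length v = M -> firstn (length u) v = u ->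
  (forall t, length u <= t < M -> d (firstn t v) = P2 -> nth t v false = c (firstn t v)) -> cov_l q M v.
Proof.
  induction k; intros u Hl HW v Lv Pv Cv.
  - rewrite firstn_all2 in Pv by lia. subst v. exact HW.
  - assert (Hb : firstn (S (length u)) v = u ++ [nth (length u) v false]).
    { rewrite firstn_S_snoc by lia. rewrite Pv. reflexivity. }
    set (b := nth (length u) v false) in *.
    assert (IHb : Wf d q M k (u ++ [b]) -> cov_l q M v).
    { intro HW'. apply (IHk (u ++ [b])); auto.
      - rewrite length_app; simpl; lia.
      - rewrite length_app, Nat.add_comm. exact Hb.
      - intros t Ht. apply Cv. rewrite length_app in Ht; simpl in Ht; lia. }
    destruct HW as [A|[[B C]|[B [C D]]]].
    + destruct A as [j [Hj [t [Ht E]]]]. exists j. split; auto. exists t. split; [lia|].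
      rewrite <- Pv, firstn_firstn in E. replace (Nat.min t (length u)) with t in E by lia. exact E.
    + assert (Eb : b = c u).
      { unfold b. rewrite <- Pv at 2. apply Cv. lia. rewrite Pv. exact B. }
      apply IHb. destruct b.
      * symmetry in Eb. apply Hcdef in Eb. replace (M - length u - 1) with k in Eb by lia. exact Eb.
      * destruct C as [C|C]; auto. exfalso.
        assert (c u = true) by (apply Hcdef; replace (M - length u - 1) with k by lia; exact C). congruence.
    + apply IHb. destruct b; auto.
Qed.

Lemma partB2 p G (Hn : game_names p G) : Force (turn G) (bsnd p) [] -> exists m s, Dgen p m s = 1.
Proof.
  intros [m0 [N0 HW]]. set (d := turn G) in *. set (q := bsnd p) in *. set (M := m0 + N0).
  assert (HW' : Wf d q M M []).
  { apply (@Wf_mono_N _ _ _ N0); [unfold M; lia|]. apply (@Wf_mono_m _ _ m0); [unfold M; lia|auto]. }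
  set (c := fun u => if excluded_middle_informative (Wf d q M (M - length u - 1) (u ++ [true])) then true else false).
  assert (Hcdef : forall u, c u = true <-> Wf d q M (M - length u - 1) (u ++ [true])).
  { intro u. unfold c. destruct (excluded_middle_informative _); split; auto; discriminate. }
  set (g := fun a => if excluded_middle_informative (exists w, widx w = a /\ c w = true) then 1 else 0).
  assert (Hg1 : forall a, g a <= 1) by (intro a; unfold g; destruct (excluded_middle_informative _); lia).
  assert (Hgw : forall w, g (widx w) = 1 <-> c w = true).
  { intro w. unfold g. destruct (excluded_middle_informative _) as [[w' [E1 E2]]|N]; split; intro H; auto.
    - apply widx_inj in E1. subst; auto.
    - discriminate.
    - exfalso; apply N; eauto. }
  set (sg := bsum (fun a => 2 ^ a * g a) (2 ^ M)).
  destruct (@bits_enc g Hg1 (2 ^ M)) as [_ Hbits]. fold sg in Hbits.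
  exists M, sg. apply ball_spec. intros i Hi. unfold Dbody.
  destruct (Nat.ltb_spec (S i) (2 ^ M)) as [L|L]; [lia|]. destruct (Nat.leb_spec (2 ^ S M) (S i)) as [L2|L2]; [lia|].
  destruct (widx_surj i) as [v Hv].
  assert (Lv : length v = M).
  { apply (@len_bounds _ _ i). rewrite <- Hv; apply widx_bounds. split; [exact L|exact L2]. }
  destruct (Nat.eqb_spec (consb p M sg i) 0) as [C0|C0]; [lia|].
  assert (C1 : consb p M sg i = 1) by (destruct (ball_01 M (consbody p sg i)); unfold consb in *; lia).
  unfold consb in C1. rewrite ball_spec in C1.
  assert (Cv : forall t, 0 <= t < M -> d (firstn t v) = P2 -> nth t v false = c (firstn t v)).
  { intros t Ht T. specialize (C1 (M - S t) ltac:(lia)). unfold consbody in C1.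
    rewrite <- Hv in C1. rewrite !anc_firstn in C1 by lia. rewrite Lv in C1.
    replace (M - S (M - S t)) with t in C1 by lia. replace (M - (M - S t)) with (S t) in C1 by lia.
    rewrite firstn_S_snoc in C1 by lia. rewrite mv_snoc in C1.
    apply (proj2 (turn_code _ Hn)) in T. rewrite T, Nat.eqb_refl in C1.
    pose proof (widx_bounds (firstn t v)) as Bt. rewrite firstn_length_le in Bt by lia.
    assert (Ba : widx (firstn t v) < 2 ^ M).
    { pose proof (@Nat.pow_le_mono_r 2 (S t) M ltac:(lia) ltac:(lia)). lia. }
    rewrite (Hbits _ Ba) in C1.
    destruct (nth t v false), (c (firstn t v)) eqn:E; auto.
    - destruct (Nat.eqb_spec 1 (g (widx (firstn t v)))) as [e|e]; [|lia].
      pose proof (proj1 (Hgw _) (eq_sym e)). congruence.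
    - apply Hgw in E. rewrite E in C1. simpl in C1. lia. }
  assert (Cov : cov_l q M v).
  { apply (@claimL d q M c Hcdef M []); auto; intros t Ht; apply Cv; simpl in Ht; lia. }
  destruct Cov as [j [Hj [t [Ht E]]]].
  assert (Pos : covb p M i <> 0).
  { unfold covb. assert (1 <= bsum (covin p j i) (S M)).
    { apply (@Nat.le_trans _ (covin p j i (M - t))); [|apply bsum_ge; lia].
      unfold covin. rewrite <- Hv, anc_firstn by lia. rewrite Lv.
      replace (M - (M - t)) with t by lia. unfold q, bsnd in E. rewrite E, Nat.eqb_refl. lia. }
    pose proof (@bsum_ge (fun j => bsum (covin p j i) (S M)) M j Hj). cbv beta in H0. lia. }
  destruct (Nat.eqb_spec (covb p M i) 0); lia.
Qed.

Lemma ball_ext N f f' : (forall t, t < N -> f t = f' t) -> ball N f = ball N f'.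
Proof. intro H. unfold ball. rewrite (@bsum_ext _ (fun t => if f' t =? 0 then 1 else 0)); auto.
  intros t Ht. rewrite H; auto. Qed.

Lemma par_le x : par x <= x.
Proof. unfold par. pose proof (Nat.div_mod_eq (x - 1) 2). lia. Qed.
Lemma anc_le t i : anc t i <= i.
Proof. unfold anc. induction t; simpl; auto. pose proof (par_le (Nat.iter t par i)). lia. Qed.

Lemma Dgen_ext P P' m s : (forall a, a < 2 ^ S (S m) + 2 * m + 2 -> P a = P' a) -> Dgen P m s = Dgen P' m s.
Proof.
  intro H. unfold Dgen. apply ball_ext. intros i Hi. unfold Dbody.
  assert (E1 : consb P m s i = consb P' m s i).
  { unfold consb. apply ball_ext. intros t Ht. unfold consbody. rewrite H; auto.
    pose proof (anc_le (S t) i). simpl (2 ^ S (S m)). simpl (2 ^ S m) in Hi. lia. }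
  assert (E2 : covb P m i = covb P' m i).
  { unfold covb. apply bsum_ext. intros j Hj. apply bsum_ext. intros t Ht. unfold covin. rewrite H; auto. lia. }
  rewrite E1, E2. reflexivity.
Qed.

Lemma H2_comp : computable H2.
Proof.
  apply computable_intro with (h := h2). apply PR_h2.
  intros p q E n. injection E; intros <-. split.
  - exists (S (need n)). unfold h2. destruct (Nat.eqb_spec (tlk (need n) (lcode (bprefix p (S (need n))))) 0); [|lia].
    apply tlk_prefix in e; lia.
  - intros k Hk. unfold h2 in *. destruct (Nat.eqb_spec (tlk (need n) (lcode (bprefix p k))) 0); [lia|].
    apply tlk_prefix in n0. f_equal. unfold out. apply Dgen_ext. intros a Ha. apply elem_prefix.
    unfold need in n0. lia.
Qed.

Lemma out_01 p n : out p n = 0 \/ out p n = 1.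
Proof. apply ball_01. Qed.

Lemma Win_le_LPO : W_le Win_A LPO.
Proof.
  exists H2, (Kmap 1 2). split; [apply H2_comp|split; [apply Kmap_comp|]].
  intros G HG p g Hpg _. cbn in Hpg. set (Gm := proj1_sig g) in *.
  set (xo := fun n => out p n =? 1).
  assert (Hname : names Cantor (out p) xo).
  { intro n. cbn. unfold xo. destruct (out_01 p n) as [E|E]; rewrite E; reflexivity. }
  assert (HdomL : exists b, LPO xo b).
  { destruct (classic (forall n, xo n = false)) as [H|H].
    - exists true. split; auto.
    - exists false. split; intro; [discriminate|contradiction]. }
  destruct (HG (out p) xo Hname HdomL) as [r [Er [b [Hb Hlpo]]]].
  exists (fun _ => if r 0 =? 1 then 1 else 2). split.
  - unfold H2. rewrite Er. reflexivity.
  - exists (if b then P1 else P2). cbn in Hb. destruct b; rewrite Hb; split; try reflexivity.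
    + apply (@partB1 Gm (bsnd p)). apply (proj2 Hpg).
      intro F. apply (partB2 Hpg) in F. destruct F as [m [s D]].
      assert (Hx : (out p (cpair m s) =? 1) = false) by exact (proj1 Hlpo eq_refl (cpair m s)). unfold out in Hx.
      rewrite (proj1 (unpair_cpair m s)), (proj2 (unpair_cpair m s)), D in Hx. discriminate.
    + assert (exists n, xo n = true).
      { apply NNPP. intro N. assert (false = true); [|discriminate]. apply Hlpo. intro n.
        destruct (xo n) eqn:E; auto. exfalso; eauto. }
      destruct H as [n Hn]. unfold xo in Hn. apply Nat.eqb_eq in Hn.
      exact (partA Hpg (cfst n) (csnd n) Hn).
Qed.

Theorem proposition10 : W_equiv Win_A LPO.
Proof. split. apply Win_le_LPO. apply LPO_le_Win. Qed.
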